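(* Let $G=(V,E)$ be a finite simple undirected graph, $\Gamma$ a subgroup of $\mathrm{Aut}(G)$, and $(G,\mathcal{C})$ the colored graph whose coloring is given by the $\Gamma$-orbits. Fix any ordering $(V_{\eta_1},\dots,V_{\eta_r})$ of the vertex color classes and let $m$ be the $2$-path function with respect to this ordering. (i) For every $\{v,w\}\in\tilde E$ and $\sigma\in\Gamma$, $m_{v\to w}=m_{\sigma(v)\to\sigma(w)}$. (ii) If $\Gamma$ is generously transitive or cyclic, then for all $v,w\in V$ with $c(v)=c(w)$ one has $m_{v\to w}(k,h)=m_{w\to v}(k,h)$ for all $k,h\in F$.
   Context: $\mathrm{Aut}(G)$ is the group of permutations $\sigma$ of $V$ with $\sigma(v)\sim\sigma(w)\iff v\sim w$. The extended edge set is $\tilde E=E\cup\{\{v\}:v\in V\}$, on which $\Gamma$ acts by $\sigma\cdot\{v,w\}=\{\sigma(v),\sigma(w)\}$. The orbit coloring: the vertex color classes $V_1,\dots,V_r$ are the $\Gamma$-orbits on $V$ (equivalently, loop orbits), and the edge color classes are the $\Gamma$-orbits on $E$; $c(v,w)$ denotes the color (orbit label) of $\{v,w\}\in\tilde E$, with loop $\{v\}$ colored by the index $i$ of the orbit $V_i\ni v$, and $c(v)=c(v,v)$. For the ordering, $\pi(v)=i$ iff $v\in V_{\eta_i}$ and $V_{\le i}=V_{\eta_1}\cup\dots\cup V_{\eta_i}$; $m_{v\to w}(k,h)=|\{u\in V_{\le\min(\pi(v),\pi(w))}: c(v,u)=k,\ c(u,w)=h\}|$ for $\{v,w\}\in\tilde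 E$. $F_i=\{c(v,w):\{v,w\}\in\tilde E,\ c(v)=c(w)=i\}$ and $F=\bigcup_iF_i$. $\Gamma$ is generously transitive if for every orbit $V_i$ and distinct $a,b\in V_i$ there is $\sigma\in\Gamma$ with $\sigma(a)=b$ and $\sigma(b)=a$. *)

(* Defs.v *)
From mathcomp Require Import all_boot all_order all_fingroup all_solvable.
Set Implicit Arguments. Unset Strict Implicit. Unset Printing Implicit Defensive.
Local Open Scope group_scope.

Section Defs.
Variables (T : finType) (e : rel T).

Definition aut_graph : {set {perm T}} :=
  [set s : {perm T} | [forall x, forall y, e (s x) (s y) == e x y]].

(* {v,w} belongs to the extended edge set E~ = E u {{v} : v in V}. *)
Definition ext_edge (v w : T) : bool := (v == w) || e v w.

Variable Gam : {group {perm T}}.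

Definition vorb (v : T) : {set T} := [set (s : {perm T}) v | s in Gam].

Definition vorbits : {set {set T}} := [set vorb v | v in T].

(* Orbit colouring of extended edges: the colour of {v,w} in E~ is its
   Gamma-orbit (as a set of unordered pairs/singletons, each represented by
   a {set T}); loops {v} get the orbit of {v}, which is in bijection with the
   vertex orbit V_i containing v. *)
Definition col (v w : T) : option {set {set T}} :=
  if ext_edge v w then
    Some [set (fun x => (s : {perm T}) x) @: [set v; w] | s in Gam]
  else None.

Variable eta : seq {set T}.

(* pi(v): position (0-based) of the class of v in the ordering. *)
Definition pi_pos (v : T) : nat := index (vorb v) eta.

Definition m2 (v w : T) (k h : {set {set T}}) : nat :=
  #|[set u : T | (pi_pos u <= minn (pi_pos v) (pi_pos w))%N
                 & (col v u == Some k) && (col u w == Some h)]|.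

Definition Fcol : {set {set {set T}}} :=
  [set k | [exists v, exists w,
     [&& ext_edge v w, vorb v == vorb w & col v w == Some k]]].

Definition gen_transitive : Prop :=
  forall a b : T, vorb a = vorb b -> a != b ->
    exists2 s : {perm T}, s \in Gam & s a = b /\ s b = a.

End Defs.

(* Main.v *)
Require Import Defs.
From mathcomp Require Import all_boot all_order all_fingroup all_solvable.

Set Implicit Arguments. Unset Strict Implicit. Unset Printing Implicit Defensive.

Section Aux.
Variables (T : finType) (e : rel T) (Gam : {group {perm T}}) (eta : seq {set T}).
Hypothesis esym : symmetric e.
Hypothesis GA : Gam \subset aut_graph e.

Lemma vorb_act s v : s \in Gam -> vorb Gam (s v) = vorb Gam v.
Proof.
move=> sG; apply/setP => z; apply/imsetP/imsetP => [[t tG ->]|[t tG ->]].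
  by exists (s * t)%g; [rewrite groupM | rewrite permM].
by exists (s^-1 * t)%g; [rewrite groupM ?groupV | rewrite permM permK].
Qed.

Lemma vorb_id v : v \in vorb Gam v.
Proof. by apply/imsetP; exists 1%g; rewrite ?group1 ?perm1. Qed.

Lemma vorbE z a : z \in vorb Gam a -> vorb Gam z = vorb Gam a.
Proof. by case/imsetP => s sG ->; rewrite vorb_act. Qed.

Lemma pi_act s v : s \in Gam -> pi_pos Gam eta (s v) = pi_pos Gam eta v.
Proof. by move=> sG; rewrite /pi_pos vorb_act. Qed.

Lemma ext_act s v w : s \in Gam -> ext_edge e (s v) (s w) = ext_edge e v w.
Proof.
move=> sG; have := subsetP GA s sG; rewrite inE => /forallP/(_ v)/forallP/(_ w)/eqP E.
by rewrite /ext_edge (inj_eq perm_inj) E.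
Qed.

Lemma col_act s v w : s \in Gam -> col e Gam (s v) (s w) = col e Gam v w.
Proof.
move=> sG; rewrite /col ext_act //; case: ifP => // _; congr Some.
apply/setP => X; apply/imsetP/imsetP => [[t tG ->]|[t tG ->]].
  exists (s * t)%g; first by rewrite groupM.
  by rewrite !imsetU1 !imset_set1 !permM.
exists (s^-1 * t)%g; first by rewrite groupM ?groupV.
by rewrite !imsetU1 !imset_set1 !permM !permK.
Qed.

Lemma col_sym v w : col e Gam v w = col e Gam w v.
Proof.
rewrite /col /ext_edge eq_sym esym; case: ifP => // _.
by congr Some; apply: eq_imset => t; rewrite setUC.
Qed.

Lemma part1 v w s k h : s \in Gam ->
  m2 e Gam eta v w k h = m2 e Gam eta (s v) (s w) k h.
Proof.
move=> sG; symmetry; rewrite /m2 -(card_preimset _ (@perm_inj _ s)).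
apply: eq_card => u; rewrite !inE pi_act // !pi_act // !col_act //.
Qed.

Lemma col_orb v u k : k \in Fcol e Gam -> col e Gam v u = Some k ->
  u \in vorb Gam v.
Proof.
rewrite inE => /existsP[a /existsP[b /and3P[ab /eqP oab /eqP cab]]].
rewrite /col in cab *; rewrite ab in cab; case: cab => <-.
case: ifP => // _ [] Hk.
have : [set v; u] \in [set (fun x => (s : {perm T}) x) @: [set v; u] | s in Gam].
  apply/imsetP; exists 1%g; rewrite ?group1 //.
  by rewrite !imsetU1 !imset_set1 !perm1.
rewrite Hk => /imsetP[t tG].
rewrite !imsetU1 !imset_set1 => Eq.
have bo : b \in vorb Gam a by rewrite oab vorb_id.
have ut : u \in [set t a; t b] by rewrite -Eq !inE eqxx orbT.
have vt : v \in [set t a; t b] by rewrite -Eq !inE eqxx.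
have ou : vorb Gam u = vorb Gam a.
  by move: ut; rewrite !inE => /orP[]/eqP ->; rewrite vorb_act // ?(vorbE bo).
have ov : vorb Gam v = vorb Gam a.
  by move: vt; rewrite !inE => /orP[]/eqP ->; rewrite vorb_act // ?(vorbE bo).
by rewrite ov -ou vorb_id.
Qed.

Lemma part2_le v w k h : abelian Gam -> vorb Gam v = vorb Gam w ->
  k \in Fcol e Gam -> (m2 e Gam eta v w k h <= m2 e Gam eta w v k h)%N.
Proof.
move=> ab ovw kF.
have comm : {in Gam &, forall x y, commute x y}.
  by move=> x y xG yG; apply: (centsP ab).
have : w \in vorb Gam v by rewrite ovw vorb_id.
case/imsetP => g gG wE.
pose f u := odflt u (omap (fun x : {perm T} => x^-1%g w) [pick x in Gam | x v == u]).
have fP u : u \in vorb Gam v -> exists2 x, x \in Gam & x v = u /\ f u = x^-1%g w.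
  move=> uo; rewrite /f; case: pickP => [x /andP[xG /eqP xv]|none].
    by exists x.
  by case/imsetP: uo => x xG xE; have := none x; rewrite xG xE eqxx.
have piv : pi_pos Gam eta v = pi_pos Gam eta w by rewrite /pi_pos ovw.
rewrite /m2 -(card_in_imset (f := f)); last first.
  move=> u1 u2; rewrite !inE => /andP[_ /andP[/eqP c1 _]] /andP[_ /andP[/eqP c2 _]].
  have [x1 x1G [x1v ->]] := fP _ (col_orb kF c1).
  have [x2 x2G [x2v ->]] := fP _ (col_orb kF c2).
  rewrite -x1v -x2v wE -!permM.
  rewrite (comm g) ?groupV // (comm g x2^-1%g) ?groupV // !permM.
  move/perm_inj => E.
  have := congr1 (fun z => x2 (x1 z)) E.
  by rewrite permKV -permM (comm x1) // permM permKV.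
apply: subset_leq_card; apply/subsetP => z /imsetP[u].
rewrite !inE => /andP[_ /andP[/eqP c1 /eqP c2]] ->.
have [x xG [xv ->]] := fP _ (col_orb kF c1).
rewrite pi_act ?groupV // -piv minnn leqnn /=.
apply/andP; split; apply/eqP.
- rewrite col_sym -c1 -xv.
  rewrite -(col_act v (x v) (s := (x^-1 * g)%g)); last by rewrite groupM ?groupV.
  rewrite !permM permK -wE; congr col.
  by rewrite wE -permM (comm g) ?groupV // permM.
- rewrite col_sym -c2 -xv -(col_act (x v) w (s := x^-1%g)) ?groupV //.
  by rewrite permK.
Qed.

End Aux.

Theorem lemma3p10 (T : finType) (e : rel T) (Gam : {group {perm T}})
    (eta : seq {set T}) :
  symmetric e -> irreflexive e ->
  Gam \subset aut_graph e ->
  perm_eq eta (enum (vorbits Gam)) ->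
  (forall (v w : T) (s : {perm T}), ext_edge e v w -> s \in Gam ->
     forall k h, m2 e Gam eta v w k h = m2 e Gam eta (s v) (s w) k h)
  /\
  (gen_transitive Gam \/ cyclic Gam ->
     forall v w : T, ext_edge e v w -> vorb Gam v = vorb Gam w ->
     forall k h, k \in Fcol e Gam -> h \in Fcol e Gam ->
       m2 e Gam eta v w k h = m2 e Gam eta w v k h).
Proof.
move=> esym _ GA _; split.
  by move=> v w s _ sG k h; exact: (part1 eta GA v w k h sG).
move=> [gt|cyc] v w vw ovw k h kF hF.
  have [->|nvw] := eqVneq v w; first by [].
  have [s sG [sv sw]] := gt v w ovw nvw.
  by rewrite (part1 eta GA v w k h sG) sv sw.
have ab := cyclic_abelian cyc.
by apply/eqP; rewrite eqn_leq (part2_le eta esym GA h ab ovw kF) (part2_le eta esym GA h ab (Logic.eq_sym ovw) kF).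
Qed.
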